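(* For every graph $G=(V,E)$ with at least one edge, $av_1(G)\ge 2$. Equality holds if and only if $N(u)\cup N(v)=V$ for every edge $uv\in E$. In particular, for $n\ge 2$ the star $S_n$ is the unique $n$-vertex tree minimising $av_1$, and it is one of the $n$-vertex graphs with at least one edge minimising $av_1$.
   Context: All graphs are finite and simple. For a graph $G=(V,E)$, a set $S\subseteq V$ is a $1$-nearly independent vertex set if the subgraph induced by $S$ has exactly one edge. $\sigma_1(G)$ is the number of such sets, $S_1(G)$ the sum of their sizes, and $av_1(G)=S_1(G)/\sigma_1(G)$. $N(v)$ is the set of neighbours of $v$. $S_n$ is the star on $n$ vertices. *)

(* Defs.v *)
From HB Require Import structures.
From mathcomp Require Import all_boot all_order all_algebra.
Set Implicit Arguments. Unset Strict Implicit. Unset Printing Implicit Defensive.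
Import Order.TTheory GRing.Theory Num.Theory.

(* A finite simple graph is a symmetric irreflexive relation e on a finType T. *)

Section NearlyIndep.
Variables (T : finType) (e : rel T).

Definition induced_edges (S : {set T}) : {set {set T}} :=
  [set U : {set T} | (U \subset S) &&
     [exists x : T, exists y : T, (U == [set x; y]) && e x y]].

Definition nearly_indep1 (S : {set T}) : bool := #|induced_edges S| == 1%N.

Definition sigma1 : nat := #|[set S : {set T} | nearly_indep1 S]|.
Definition S1 : nat := \sum_(S : {set T} | nearly_indep1 S) #|S|.
Definition av1 : rat := (S1%:R / sigma1%:R)%R.

Definition nbhd (v : T) : {set T} := [set u | e v u].

Definition has_edge : Prop := exists u v, e u v.

Definition connected_graph : Prop := forall x y, connect e x y.
Definition acyclic : Prop :=
  ~ exists p : seq T, [&& uniq p, 2 < size p & cycle e p].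
Definition is_tree : Prop := connected_graph /\ acyclic.
End NearlyIndep.

Definition star (n : nat) : rel 'I_n :=
  fun x y => (x != y) && ((val x == 0%N) || (val y == 0%N)).

Definition isomorphic (T : finType) (e e' : rel T) : Prop :=
  exists f : T -> T, bijective f /\ forall x y, e x y = e' (f x) (f y).
Arguments star n x y : clear implicits.

(* Main.v *)
Require Import Defs.
From mathcomp Require Import all_boot all_order all_algebra all_fingroup zify.
Import Order.TTheory GRing.Theory Num.Theory.
Set Implicit Arguments. Unset Strict Implicit. Unset Printing Implicit Defensive.

Section P1.
Variables (T : finType) (e : rel T).
Hypotheses (esy : symmetric e) (eirr : irreflexive e).

Lemma ni1P (S : {set T}) : nearly_indep1 e S -> exists x y, [/\ e x y, x \in S, y \in S &
  forall a b, a \in S -> b \in S -> e a b -> [set a; b] = [set x; y]].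
Proof.
rewrite /nearly_indep1 => /cards1P [U0 HU].
have : U0 \in induced_edges e S by rewrite HU set11.
rewrite inE => /andP [sub /existsP [x /existsP [y /andP [/eqP HU0 exy]]]].
exists x, y; split => //.
- by apply: (subsetP sub); rewrite HU0 set21.
- by apply: (subsetP sub); rewrite HU0 set22.
move=> a b aS bS eab; have : [set a; b] \in induced_edges e S.
  rewrite inE; apply/andP; split.
    by apply/subsetP => z; rewrite !inE => /orP [/eqP->|/eqP->].
  by apply/existsP; exists a; apply/existsP; exists b; rewrite eqxx.
by rewrite HU in_set1 HU0 => /eqP.
Qed.

Lemma ni1_of (S : {set T}) x y : e x y -> x \in S -> y \in S ->
  (forall a b, a \in S -> b \in S -> e a b -> [set a; b] = [set x; y]) ->
  nearly_indep1 e S.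
Proof.
move=> exy xS yS H; rewrite /nearly_indep1.
suff -> : induced_edges e S = [set [set x; y]] by rewrite cards1.
apply/setP => U; rewrite in_set1 /induced_edges inE; apply/andP/eqP.
- case=> sub /existsP [a /existsP [b /andP [/eqP HU eab]]]; subst U.
  by apply: H => //; apply: (subsetP sub); rewrite !inE eqxx ?orbT.
- move=> ->; split.
    by apply/subsetP => z; rewrite !inE => /orP [/eqP->|/eqP->].
  by apply/existsP; exists x; apply/existsP; exists y; rewrite eqxx.
Qed.

Lemma neq_of_e x y : e x y -> x != y.
Proof. by apply: contraTneq => ->; rewrite eirr. Qed.

Lemma ni1_size (S : {set T}) : nearly_indep1 e S -> (2 <= #|S|)%N.
Proof.
case/ni1P => x [y [exy xS yS _]].
have -> : 2%N = #|[set x; y]| by rewrite cards2 neq_of_e.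
by apply: subset_leq_card; apply/subsetP => z; rewrite !inE => /orP [/eqP->|/eqP->].
Qed.

Lemma ni1_edge u v : e u v -> nearly_indep1 e [set u; v].
Proof.
move=> euv; apply: (ni1_of euv); rewrite ?set21 ?set22 //.
move=> a b; rewrite !inE => /orP [/eqP->|/eqP->] /orP [/eqP->|/eqP->] //;
  rewrite ?eirr // => _; exact: setUC.
Qed.

Lemma sigma_pos : has_edge e -> (0 < sigma1 e)%N.
Proof.
case=> u [v euv]; rewrite /sigma1 card_gt0; apply/set0Pn.
by exists [set u; v]; rewrite inE ni1_edge.
Qed.

Definition D := \sum_(S : {set T} | nearly_indep1 e S) (#|S| - 2)%N.

Lemma S1E : S1 e = (D + 2 * sigma1 e)%N.
Proof.
have Hs : sigma1 e = \sum_(S : {set T} | nearly_indep1 e S) 1%N.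
  by rewrite /sigma1 -sum1_card; apply: eq_bigl => S; rewrite inE.
rewrite /S1 Hs big_distrr /= /D -big_split /=; apply: eq_bigr => S /ni1_size h.
by rewrite muln1 subnK.
Qed.

Lemma av1E : has_edge e -> av1 e = ((D%:R / (sigma1 e)%:R) + 2)%R.
Proof.
move=> /sigma_pos hs; rewrite /av1 S1E natrD natrM mulrDl mulfK //.
by rewrite pnatr_eq0 -lt0n.
Qed.

Lemma D0P : reflect (forall S, nearly_indep1 e S -> #|S| = 2%N) (D == 0%N).
Proof.
rewrite /D sum_nat_eq0; apply: (iffP forall_inP) => H S /[dup] hS /H.
  by rewrite subn_eq0 => h; apply/eqP; rewrite eqn_leq h ni1_size.
by move=> ->.
Qed.

Local Open Scope ring_scope.
Lemma part1 : has_edge e -> (2 <= av1 e)%R /\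
      (av1 e = 2 <-> forall u v, e u v -> nbhd e u :|: nbhd e v = [set: T]).
Proof.
move=> he; have hs := sigma_pos he; rewrite av1E //; split.
  by rewrite lerDr divr_ge0 ?ler0n.
have Heq : (D%:R / (sigma1 e)%:R + 2 = 2 :> rat) <-> (D == 0%N).
  split.
    move/(congr1 (fun t => t - 2)); rewrite addrK subrr => /eqP.
    by rewrite mulf_eq0 invr_eq0 !pnatr_eq0 -[sigma1 e == 0%N]negbK -lt0n hs orbF.
  by move=> /eqP ->; rewrite mul0r add0r.
apply: (iff_trans Heq).
split.
- move=> /D0P H u v euv; apply/setP => w; rewrite !inE.
  apply/negPn/negP; rewrite negb_or => /andP [nuw nvw].
  have wu : w != u by apply: contraNneq nvw => ->; rewrite esy.
  have wv : w != v by apply: contraNneq nuw => ->.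
  have : nearly_indep1 e [set u; v; w].
    apply: (ni1_of euv); rewrite ?inE ?eqxx ?orbT //.
    move=> a b; rewrite !inE => /orP [/orP [/eqP->|/eqP->]|/eqP->] /orP [/orP [/eqP->|/eqP->]|/eqP->];
      rewrite ?eirr ?(negbTE nuw) ?(negbTE nvw) ?(esy w) ?(negbTE nuw) ?(negbTE nvw) // => _;
      exact: setUC.
  move/H/eqP; rewrite (_ : [set u; v; w] = u |: [set v; w]); last by apply/setP=>z; rewrite !inE orbA.
  by rewrite cardsU1 cards2 !inE negb_or (eq_sym u w) wu (eq_sym v w) wv (neq_of_e euv).
- move=> H; apply/D0P => S /ni1P [x [y [exy xS yS Hab]]].
  apply/eqP; rewrite eqn_leq; apply/andP; split; last first.
    have -> : 2%N = #|[set x; y]| by rewrite cards2 neq_of_e.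
    by apply: subset_leq_card; apply/subsetP => z; rewrite !inE => /orP [/eqP->|/eqP->].
  have -> : S = [set x; y].
    apply/eqP; rewrite eqEsubset andbC; apply/andP; split.
      by apply/subsetP => z; rewrite !inE => /orP [/eqP->|/eqP->].
    apply/subsetP => z zS; rewrite !inE; apply/negPn/negP; rewrite negb_or => /andP [zx zy].
    have := H x y exy; move/setP/(_ z); rewrite !inE.
    case/orP => [exz|eyz].
      have := Hab x z xS zS exz; move/setP/(_ z); rewrite !inE eqxx orbT.
      by move/esym/orP => [] /eqP hz; move: zx zy; rewrite hz eqxx.
    have := Hab y z yS zS eyz; move/setP/(_ z); rewrite !inE eqxx orbT.
    by move/esym/orP => [] /eqP hz; move: zx zy; rewrite hz eqxx.
  by rewrite cards2 neq_of_e.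
Qed.
End P1.

Section Tree.
Variables (T : finType) (e : rel T).
Hypotheses (esy : symmetric e) (eirr : irreflexive e) (acyc : acyclic e).

Lemma no3 a b c : e a b -> e b c -> e c a -> False.
Proof.
move=> eab ebc eca; apply: acyc; exists [:: a; b; c].
rewrite /= !inE negb_or eab ebc eca (neq_of_e eirr eab) (neq_of_e eirr ebc).
by rewrite eq_sym (neq_of_e eirr eca).
Qed.

Lemma center u v : e u v ->
  (forall u v, e u v -> nbhd e u :|: nbhd e v = [set: T]) ->
  exists c, forall x y, e x y = (x != y) && ((x == c) || (y == c)).
Proof.
move=> euv cov.
have covP a b z : e a b -> e a z || e b z.
  by move=> /cov /setP /(_ z); rewrite !inE.
have [c hc] : exists c, forall z, z != c -> e c z.
  case: (pickP (fun w => (w != u) && ~~ e u w)) => [w /andP [wu nuw] | H]; last first.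
    by exists u => z zu; move: (H z); rewrite /= zu /= => /negbFE.
  have evw : e v w by move: (covP u v w euv); rewrite (negbTE nuw).
  exists v => z zv; apply/negPn/negP => nvz.
  have zu : z != u by apply: contraNneq nvz => ->; rewrite esy.
  have euz : e u z by move: (covP u v z euv); rewrite (negbTE nvz) orbF.
  have ezw : e z w by move: (covP u z w euz); rewrite (negbTE nuw).
  apply: acyc; exists [:: u; z; w; v].
  rewrite /= !inE euz ezw (esy w) evw (esy v) euv /= andbT.
  rewrite !negb_or (eq_sym u z) zu (eq_sym u w) wu (neq_of_e eirr euv) (neq_of_e eirr ezw) zv.
  by rewrite (neq_of_e eirr (_ : e w v)) // esy.
exists c => x y; case exy: (e x y).
  symmetry; rewrite (neq_of_e eirr exy) /=; apply/negPn/negP; rewrite negb_or => /andP [xc yc].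
  have eyc : e y c by rewrite esy hc.
  exact: no3 (hc x xc) exy eyc.
apply/esym/negbTE; apply/negP => /andP [xy /orP [/eqP xc|/eqP yc]].
  by move: exy; rewrite xc hc // eq_sym -xc.
by move: exy; rewrite yc esy hc // -yc.
Qed.
End Tree.

Section Star.
Variable m : nat.
Local Notation n := m.+2.
Local Notation st := (star n).

Lemma st_sym : symmetric st.
Proof. by move=> x y; rewrite /star eq_sym orbC. Qed.

Lemma st_irr : irreflexive st.
Proof. by move=> x; rewrite /star eqxx. Qed.

Lemma st_edge : st ord0 ord_max.
Proof. by []. Qed.

Lemma st_he : has_edge st.
Proof. by exists ord0, ord_max. Qed.

Lemma st_cover u v : st u v -> nbhd st u :|: nbhd st v = [set: 'I_n].
Proof.
move=> huv; apply/setP => z; rewrite !inE; move: huv; rewrite /star -!val_eqE /=.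
case: u v z => [a ha] [b hb] [c hc] /=; lia.
Qed.

Lemma st_av1 : av1 st = 2%:R%R.
Proof. by apply/(part1 st_sym st_irr st_he).2 => u v; apply: st_cover. Qed.

Lemma st_tree : is_tree st.
Proof.
split.
  have h0 x : connect st x ord0.
    case: (eqVneq x ord0) => [->|xn]; first exact: connect0.
    by apply: connect1; rewrite /star xn orbT.
  move=> x y; apply: connect_trans (h0 x) _.
  case: (eqVneq y ord0) => [->|yn]; first exact: connect0.
  by apply: connect1; rewrite /star eq_sym yn.
have key (p : seq 'I_n) a b c q : uniq p -> path.cycle st p -> p = [:: a, b, c & q] -> val b = 0%N.
  move=> up cp hp; subst p; move: cp up; rewrite /= /star -!val_eqE /=.
  case/andP => /andP [ab hab] /andP [/andP [bc hbc] _].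
  rewrite !inE !negb_or => /andP [/andP [_ /andP [/negP ac _]] _].
  apply/eqP; apply/negPn/negP => b0.
  move: hab hbc; rewrite (negbTE b0) orbF /= => /eqP a0 /eqP c0.
  by apply: ac; apply/eqP/val_inj; rewrite /= a0 c0.
case=> p /and3P [up sp cp].
case: p up sp cp => [|a [|b [|c q]]] // up _ cp.
have hb := key _ _ _ _ _ up cp erefl.
have hc : val c = 0%N.
  apply: (key (rot 1 [:: a, b, c & q]) b c (head a q) (behead (rcons q a))).
  - by rewrite rot_uniq.
  - by rewrite rot_cycle.
  - by rewrite /rot /= cats1; case: (q) => [|d r].
move: up; rewrite /= !inE => /and4P [_ h _ _]; move: h; rewrite negb_or => /andP [bc _].
by move: bc; rewrite -val_eqE hb hc.
Qed.
End Star.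

Lemma tree_edge m (e : rel 'I_m.+2) : is_tree e -> has_edge e.
Proof.
case=> /(_ ord0 ord_max) /connectP [p pp hl] _.
case: p pp hl => [|z p] /=; first by [].
by case/andP => h _ _; exists ord0, z.
Qed.

Lemma iso_center m (e : rel 'I_m.+2) c :
  (forall x y, e x y = (x != y) && ((x == c) || (y == c))) -> isomorphic e (star m.+2).
Proof.
move=> hc; exists (tperm c ord0); split.
  exact: (Bijective (tpermK c ord0) (tpermK c ord0)).
have hv x : (val (tperm c ord0 x) == 0%N) = (x == c).
  rewrite (_ : 0%N = val (ord0 : 'I_m.+2)) // val_eqE.
  by rewrite -[X in _ == X](tpermL c ord0) (inj_eq perm_inj).
by move=> x y; rewrite hc /star !hv (inj_eq perm_inj).
Qed.

Local Open Scope ring_scope.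

Theorem mainTheorem7 :
  (forall (T : finType) (e : rel T),
      symmetric e -> irreflexive e -> has_edge e ->
      (2 <= av1 e)%R /\
      (av1 e = 2 <->
         forall u v, e u v -> nbhd e u :|: nbhd e v = [set: T]))
  /\
  (forall n : nat, (2 <= n)%N ->
      is_tree (star n) /\
      (forall e : rel 'I_n, symmetric e -> irreflexive e -> is_tree e ->
         (av1 (star n) <= av1 e)%R /\
         (av1 e = av1 (star n) -> isomorphic e (star n))) /\
      has_edge (star n) /\
      (forall e : rel 'I_n, symmetric e -> irreflexive e -> has_edge e ->
         (av1 (star n) <= av1 e)%R)).
Proof.
split; first by move=> T e hs hi he; exact: part1.
case=> [|[|m]] // _.
split; first exact: st_tree.
split.
  move=> e hs hi ht; have he := tree_edge ht.
  have [h2 heq] := part1 hs hi he.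
  rewrite st_av1; split => // h.
  have [u [v euv]] := he.
  have [c hc] := center hs hi ht.2 euv ((heq.1 h)).
  exact: iso_center hc.
split; first exact: st_he.
by move=> e hs hi he; rewrite st_av1; exact: (part1 hs hi he).1.
Qed.
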